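(* Let $v$ be any vertex of a Euclidean minimum spanning tree of a finite point set in the plane. Then: (i) if $\deg(v)=3$, there exists an angle at $v$ that is at most $120^\circ$; (ii) if $\deg(v)=4$, there exist two nonadjacent angles at $v$ that are at most $90^\circ$ and $120^\circ$, respectively; (iii) if $\deg(v)=5$, then all angles at $v$ are at most $120^\circ$, and there exist two nonadjacent angles at $v$ that are at most $90^\circ$.
   Context: Angles are measured in degrees. For a vertex $v$ of degree at least $3$ in the minimum spanning tree, sort its incident edges radially around $v$; an angle at $v$ is the angle between two radially consecutive incident edges. Two angles at $v$ are adjacent if they share a bounding edge, and nonadjacent otherwise. $\deg(v)$ denotes the degree of $v$ in the tree. *)

(* Defs.v *)
From HB Require Import structures.
From mathcomp Require Import all_boot all_order all_algebra.
From mathcomp Require Import all_classical all_reals.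
From mathcomp Require Import trigo.
Set Implicit Arguments. Unset Strict Implicit. Unset Printing Implicit Defensive.
Import Order.TTheory GRing.Theory Num.Theory.
Local Open Scope ring_scope.

Section EMST.
Variable R : realType.
Notation pt := (R * R)%type.

Definition edist (a b : pt) : R :=
  Num.sqrt ((a.1 - b.1) ^+ 2 + (a.2 - b.2) ^+ 2).

Definition vnorm (a : pt) : R := Num.sqrt (a.1 ^+ 2 + a.2 ^+ 2).

(* Counterclockwise angle (in degrees, in [0,360)) swept from direction a
   to direction b. *)
Definition ccw_deg (a b : pt) : R :=
  let t := acos ((a.1 * b.1 + a.2 * b.2) / (vnorm a * vnorm b)) * 180 / pi in
  if 0 <= a.1 * b.2 - a.2 * b.1 then t else 360 - t.

Variable n : nat.

Definition nedges (E : rel 'I_n) : nat :=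
  #|[set e : 'I_n * 'I_n | (e.1 < e.2)%N && E e.1 e.2]|.

Definition weight (p : 'I_n -> pt) (E : rel 'I_n) : R :=
  \sum_(i < n) \sum_(j < n | (i < j)%N && E i j) edist (p i) (p j).

Definition simple_graph (E : rel 'I_n) : Prop :=
  (forall i j, E i j = E j i) /\ (forall i, E i i = false).

Definition spanning_tree (E : rel 'I_n) : Prop :=
  simple_graph E /\ (forall i j, connect E i j) /\ nedges E = n.-1.

Definition is_EMST (p : 'I_n -> pt) (E : rel 'I_n) : Prop :=
  spanning_tree E /\
  forall E' : rel 'I_n, spanning_tree E' -> weight p E <= weight p E'.

Definition deg (E : rel 'I_n) (v : 'I_n) : nat := #|[set u | E v u]|.

Definition angle_at (p : 'I_n -> pt) (v u w : 'I_n) : R :=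
  ccw_deg (p u - p v) (p w - p v).

(* edges vu and vw are radially consecutive (vw follows vu counterclockwise
   around v): no other incident edge lies strictly inside the sweep. *)
Definition consecutive (p : 'I_n -> pt) (E : rel 'I_n) (v u w : 'I_n) : Prop :=
  [/\ E v u, E v w, u != w &
      forall x, E v x -> x != u -> x != w ->
        ~ (angle_at p v u x < angle_at p v u w)].

(* two angles (u,w) and (u',w') at v are nonadjacent: no shared bounding edge *)
Definition nonadjacent (u w u' w' : 'I_n) : Prop :=
  [/\ u != u', u != w', w != u' & w != w'].

End EMST.

(* Main.v *)
Require Import Defs.
From HB Require Import structures.
From mathcomp Require Import all_boot all_order all_algebra.
From mathcomp Require Import all_classical all_reals.
From mathcomp Require Import trigo.
From mathcomp Require Import ring lra.
Import Order.TTheory GRing.Theory Num.Theory.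
Local Open Scope ring_scope.
Set Implicit Arguments. Unset Strict Implicit.

Definition Ang {R : realType} (c s : R) : R :=
  if 0 <= s then acos c else pi *+ 2 - acos c.

Lemma sq_le1 {R : realType} (c s : R) : c ^+ 2 + s ^+ 2 = 1 -> -1 <= c <= 1.
Proof. move=> h; apply/andP; split; nra. Qed.

Lemma Ang_spec {R : realType} (c s : R) : c ^+ 2 + s ^+ 2 = 1 ->
  [/\ 0 <= Ang c s, Ang c s < pi *+ 2, cos (Ang c s) = c & sin (Ang c s) = s].
Proof.
move=> h; have hc := @sq_le1 R c s h.
have hin : c \in `[-1, 1] by rewrite in_itv /=.
have a0 := acos_ge0 hc; have api := acos_lepi hc.
have pi0 := pi_gt0 R.
have ss : Num.sqrt (1 - c ^+ 2) = `|s| by rewrite -sqrtr_sqr; congr Num.sqrt; lra.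
rewrite /Ang; case: ifP => hs.
  split => //; first by rewrite mulr2n; lra.
  - exact: acosK.
  - by rewrite sin_acos // ss ger0_norm.
have hs' : s < 0 by rewrite ltNge hs.
have c1 : c < 1.
  rewrite lt_neqAle; case/andP: hc => _ ->; rewrite andbT; apply/eqP => e.
  subst c; have : s ^+ 2 = 0 by lra. by move/eqP; rewrite sqrf_eq0 => /eqP e; lra.
have ag := @acos_gt0 R c; have : 0 < acos c by apply: ag; case/andP: hc => ->.
move=> ag0.
have e : pi *+ 2 - acos c = - acos c + pi *+ 2 by rewrite addrC.
split.
- rewrite mulr2n; lra.
- lra.
- by rewrite e cosD2pi cosN acosK.
- by rewrite e sinD2pi sinN sin_acos // ss ltr0_norm // opprK.
Qed.

Lemma Ang_cos_sin {R : realType} (d : R) : 0 <= d -> d < pi *+ 2 ->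
  Ang (cos d) (sin d) = d.
Proof.
move=> d0 d2; have pi0 := pi_gt0 R.
rewrite /Ang; case: (lerP d pi) => hd.
  have -> : 0 <= sin d by apply: sin_ge0_pi; rewrite d0 hd.
  by apply: cosK; rewrite in_itv /= d0 hd.
have e1 : d = - (pi *+ 2 - d) + pi *+ 2 by rewrite mulr2n; lra.
have h2 : 0 < pi *+ 2 - d < pi by apply/andP; split; rewrite mulr2n; lra.
have hs : sin d < 0.
  rewrite e1 sinD2pi sinN oppr_lt0; exact: sin_gt0_pi.
rewrite leNgt hs /=.
rewrite e1 cosD2pi cosN cosK; last by rewrite in_itv /=; case/andP: h2 => h3 h4; apply/andP; split; lra.
by rewrite mulr2n; lra.
Qed.

Definition kdeg {R : realType} : R := 180 / pi.
Lemma kdeg_gt0 {R : realType} : 0 < @kdeg R.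
Proof. by rewrite /kdeg divr_gt0 // pi_gt0. Qed.
Lemma kdeg_pi {R : realType} : pi * @kdeg R = 180.
Proof. by rewrite /kdeg mulrC -mulrA mulVf ?mulr1 // gt_eqF // pi_gt0. Qed.

Definition phi {R : realType} (a : R * R) : R :=
  Ang (a.1 / vnorm a) (a.2 / vnorm a) * kdeg.
Definition cyc {R : realType} (t : R) : R := if 0 <= t then t else t + 360.

Lemma vnorm_sq {R : realType} (a : R * R) : vnorm a ^+ 2 = a.1 ^+ 2 + a.2 ^+ 2.
Proof. rewrite /vnorm sqr_sqrtr //; nra. Qed.

Lemma vnorm_gt0 {R : realType} (a : R * R) : a != 0 -> 0 < vnorm a.
Proof.
case: a => x y /= h; rewrite /vnorm sqrtr_gt0 /=.
have [hx|hx] := eqVneq x 0.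
  have [hy|hy] := eqVneq y 0; first by subst; rewrite eqxx in h.
  have : 0 < y ^+ 2 by rewrite exprn_even_gt0.
  have : 0 <= x ^+ 2 by rewrite sqr_ge0. lra.
have : 0 < x ^+ 2 by rewrite exprn_even_gt0.
have : 0 <= y ^+ 2 by rewrite sqr_ge0. lra.
Qed.

Lemma unit_sq {R : realType} (a : R * R) : a != 0 ->
  (a.1 / vnorm a) ^+ 2 + (a.2 / vnorm a) ^+ 2 = 1.
Proof.
move=> h; have n0 := vnorm_gt0 h; have hs := vnorm_sq a.
rewrite !expr_div_n -mulrDl -hs divff // expf_neq0 // gt_eqF //.
Qed.

Lemma polar {R : realType} (a : R * R) : a != 0 ->
  let al := Ang (a.1 / vnorm a) (a.2 / vnorm a) in
  [/\ 0 <= al, al < pi *+ 2, cos al = a.1 / vnorm a & sin al = a.2 / vnorm a].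
Proof. by move=> h; apply: Ang_spec; apply: unit_sq. Qed.

Lemma phi_range {R : realType} (a : R * R) : a != 0 -> 0 <= phi a < 360.
Proof.
move=> h; have [h1 h2 _ _] := polar h; have k0 := @kdeg_gt0 R.
rewrite /phi; apply/andP; split; first by rewrite mulr_ge0 // ltW.
have -> : (360 : R) = pi *+ 2 * kdeg by rewrite mulr2n mulrDl kdeg_pi; lra.
by rewrite ltr_pM2r.
Qed.

Lemma ccw_cyc {R : realType} (a b : R * R) : a != 0 -> b != 0 ->
  ccw_deg a b = cyc (phi b - phi a).
Proof.
move=> ha hb.
have [a0 a2 ca sa] := polar ha; have [b0 b2 cb sb] := polar hb.
set al := Ang _ _ in a0 a2 ca sa; set be := Ang _ _ in b0 b2 cb sb.
have na := vnorm_gt0 ha; have nb := vnorm_gt0 hb.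
have nab : 0 < vnorm a * vnorm b by rewrite mulr_gt0.
set D := (a.1 * b.1 + a.2 * b.2) / (vnorm a * vnorm b).
set cr := a.1 * b.2 - a.2 * b.1.
have eD : D = cos (be - al).
  rewrite cosB cb sb ca sa /D; field; apply/andP; split; rewrite gt_eqF //.
have eC : cr = sin (be - al) * (vnorm a * vnorm b).
  rewrite sinB cb sb ca sa /cr; field; apply/andP; split; rewrite gt_eqF //.
have pi0 := pi_gt0 R; have k0 := @kdeg_gt0 R; have kp := @kdeg_pi R.
have k2 : pi *+ 2 * kdeg = 360 :> R by rewrite mulr2n mulrDl kp; lra.
pose d := if al <= be then be - al else be - al + pi *+ 2.
have ed : cos d = cos (be - al) /\ sin d = sin (be - al).
  by rewrite /d; case: ifP => _ //; rewrite cosD2pi sinD2pi.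
have d0 : 0 <= d by rewrite /d; case: ifP => h; rewrite ?mulr2n; lra.
have d2 : d < pi *+ 2 by rewrite /d; case: ifP => h; rewrite ?mulr2n; lra.
have hA := Ang_cos_sin d0 d2.
rewrite /ccw_deg -/D -/cr eD eC pmulr_lge0 //.
have -> : (if 0 <= sin (be - al)
   then acos (cos (be - al)) * 180 / pi
   else 360 - acos (cos (be - al)) * 180 / pi) = Ang (cos d) (sin d) * kdeg.
  have k3 : forall y : R, y * 180 / pi = y * kdeg by move=> y; rewrite /kdeg mulrA.
  case: ed => -> ->; rewrite /Ang; case: ifP => _; rewrite k3 //.
  rewrite mulrBl k2 //.
rewrite hA /phi -/al -/be /cyc /d.
case: (lerP al be) => h.
  by rewrite -mulrBl ifT // mulr_ge0 // ?subr_ge0 // ltW.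
rewrite ifF; last by apply/negbTE; rewrite -ltNge -mulrBl pmulr_llt0 // subr_lt0.
by rewrite mulrDl k2 mulrBl.
Qed.

Lemma cos_pi3 {R : realType} : cos (pi / 3) = 1 / 2 :> R.
Proof.
set x : R := pi / 3.
have e : pi = x + x + x by rewrite /x; field.
have h3 : cos (x + x + x) = -1 by rewrite -e cospi.
have s2 := sin2cos2 x.
rewrite !cosD !sinD in h3.
have c0 : 0 < cos x.
  apply: cos_gt0_pihalf; have := pi_gt0 R; rewrite /x => ?; apply/andP; split; lra.
set c := cos x in h3 s2 c0 *; set s := sin x in h3 s2 *.
have : (c + 1) * (2 * c - 1) ^+ 2 = 0 by nra.
move/eqP; rewrite mulf_eq0 sqrf_eq0 => /orP [] /eqP h; lra.
Qed.

Lemma lt60_dot {R : realType} (a b : R * R) : a != 0 -> b != 0 ->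
  ccw_deg a b < 60 ->
  vnorm a * vnorm b < 2 * (a.1 * b.1 + a.2 * b.2).
Proof.
move=> ha hb.
have [a0 a2 ca sa] := polar ha; have [b0 b2 cb sb] := polar hb.
set al := Ang _ _ in a0 a2 ca sa; set be := Ang _ _ in b0 b2 cb sb.
have na := vnorm_gt0 ha; have nb := vnorm_gt0 hb.
have nab : 0 < vnorm a * vnorm b by rewrite mulr_gt0.
have pi0 := pi_gt0 R; have k0 := @kdeg_gt0 R; have kp := @kdeg_pi R.
have k2 : pi *+ 2 * kdeg = 360 :> R by rewrite mulr2n mulrDl kp; lra.
rewrite ccw_cyc // /phi -/al -/be.
pose d := if al <= be then be - al else be - al + pi *+ 2.
have ed : cos d = cos (be - al).
  by rewrite /d; case: ifP => _ //; rewrite cosD2pi.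
have d0 : 0 <= d by rewrite /d; case: ifP => h; rewrite ?mulr2n; lra.
have -> : cyc (be * kdeg - al * kdeg) = d * kdeg.
  rewrite /cyc /d; case: (lerP al be) => h.
    by rewrite -mulrBl ifT // mulr_ge0 // ?subr_ge0 // ltW.
  rewrite ifF; last by apply/negbTE; rewrite -ltNge -mulrBl pmulr_llt0 // subr_lt0.
  by rewrite mulrDl k2 mulrBl.
move=> hd.
have hd' : d < pi / 3.
  have : d * kdeg < (pi / 3) * kdeg by rewrite mulrAC kp; lra.
  by rewrite ltr_pM2r.
have hc : cos (pi / 3) < cos d.
  rewrite ltr_cos ?in_itv /= ?d0 //; apply/andP; split; lra.
rewrite cos_pi3 ed cosB cb sb ca sa in hc.
have e : b.1 / vnorm b * (a.1 / vnorm a) + b.2 / vnorm b * (a.2 / vnorm a)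
   = (a.1 * b.1 + a.2 * b.2) / (vnorm a * vnorm b).
  field; apply/andP; split; rewrite gt_eqF //.
rewrite e in hc.
have : 1 / 2 * (vnorm a * vnorm b) < (a.1 * b.1 + a.2 * b.2).
  by rewrite -ltr_pdivlMr.
lra.
Qed.

Definition op {n} (x y : 'I_n) : 'I_n * 'I_n := if (x < y)%N then (x, y) else (y, x).
Definition eset {n} (E : rel 'I_n) := [set e : 'I_n * 'I_n | (e.1 < e.2)%N && E e.1 e.2].
Definition ip {n} (a b x y : 'I_n) := ((a == x) && (b == y)) || ((a == y) && (b == x)).

Lemma ip_op {n} (x y : 'I_n) (e : 'I_n * 'I_n) : x != y ->
  ((e.1 < e.2)%N && ip e.1 e.2 x y) = (e == op x y).
Proof.
case: e => a b /= hxy; rewrite /ip /op.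
case: (ltngtP x y) => h.
- rewrite xpair_eqE; apply/idP/idP.
  + case/andP=> hab /orP [] // /andP [/eqP ea /eqP eb]; subst; exfalso.
    by move: (ltn_trans hab h); rewrite ltnn.
  + by case/andP=> /eqP -> /eqP ->; rewrite h !eqxx.
- rewrite xpair_eqE; apply/idP/idP.
  + case/andP=> hab /orP [] // /andP [/eqP ea /eqP eb]; subst; exfalso.
    by move: (ltn_trans hab h); rewrite ltnn.
  + by case/andP=> /eqP -> /eqP ->; rewrite h !eqxx orbT.
- by exfalso; move: hxy; rewrite (val_inj h) eqxx.
Qed.

Lemma op_in {n} (E : rel 'I_n) (x y : 'I_n) : (forall i j, E i j = E j i) ->
  x != y -> (op x y \in eset E) = E x y.
Proof.
move=> sy hxy; rewrite /op; case: ltngtP => h; rewrite inE /= ?h //.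
all: try (by rewrite sy).
all: by move: hxy; rewrite ?(val_inj h) eqxx.
Qed.

Lemma op_inj {n} (x y x' y' : 'I_n) : op x y = op x' y' ->
  (x = x' /\ y = y') \/ (x = y' /\ y = x').
Proof.
rewrite /op; case: ifP => _; case: ifP => _ [-> ->]; tauto.
Qed.

Lemma weightE {R : realType} {n} (p : 'I_n -> R * R) (E : rel 'I_n) :
  weight p E = \sum_(e in eset E) edist (p e.1) (p e.2).
Proof.
rewrite /weight pair_big_dep /=; apply: eq_bigl => e; by rewrite inE.
Qed.

Lemma edist_sym {R : realType} (a b : R * R) : edist a b = edist b a.
Proof. by rewrite /edist -(sqrrN (a.1 - b.1)) -(sqrrN (a.2 - b.2)) !opprB. Qed.

Lemma edist_op {R : realType} {n} (p : 'I_n -> R * R) (x y : 'I_n) :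
  edist (p (op x y).1) (p (op x y).2) = edist (p x) (p y).
Proof. by rewrite /op; case: ifP => _ //=; rewrite edist_sym. Qed.

Section Conn.
Variable n : nat.
Variable E : rel 'I_n.
Hypothesis sy : forall i j, E i j = E j i.
Variable r : 'I_n.
Hypothesis con : forall x, connect E r x.

Definition P (x : 'I_n) (k : nat) :=
  [exists t : k.-tuple 'I_n, path E r t && (last r t == x)].

Lemma exP x : exists k, P x k.
Proof.
have /connectP [s hp hl] := con x.
exists (size s); apply/existsP; exists (in_tuple s); by rewrite /= hp hl eqxx.
Qed.

Definition d x := ex_minn (exP x).

Lemma dpar x : x != r -> exists z, E x z && (d z < d x)%N.
Proof.
move=> hx; rewrite /d; case: ex_minnP => m /existsP [t /andP [hp hl]] hmin.
move: hp hl; have := size_tuple t; case/lastP: (tval t) => [|q y] hs.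
  by move=> _ /eqP e; rewrite -e eqxx in hx.
rewrite rcons_path last_rcons => /andP [hq hE] /eqP ey; subst y.
exists (last r q); rewrite sy hE /=.
case: ex_minnP => m' _ hmin'.
have : P (last r q) (size q).
  by apply/existsP; exists (in_tuple q); rewrite /= hq eqxx.
move/hmin' => h; apply: (leq_ltn_trans h); by rewrite -hs size_rcons.
Qed.

Definition par x := odflt r [pick z | E x z && (d z < d x)%N].

Lemma parP x : x != r -> E x (par x) && (d (par x) < d x)%N.
Proof.
move=> hx; rewrite /par; case: pickP => [z hz //|h0].
by have [z hz] := dpar hx; rewrite h0 in hz.
Qed.

Lemma conn_edges : (n.-1 <= #|eset E|)%N.
Proof.
pose f x := op x (par x).
have hA : #|[set~ r]| = n.-1 by rewrite cardsC1 card_ord.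
have sub : f @: [set~ r] \subset eset E.
  apply/fintype.subsetP => e /imsetP [x hx' ->].
  have hx : x != r by move: hx'; rewrite !inE.
  have /andP [h1 h2] := parP hx.
  rewrite op_in //; apply/eqP => e0; rewrite -e0 in h2; by rewrite ltnn in h2.
have inj : {in [set~ r] &, injective f}.
  move=> x y; rewrite !inE => hx hy; rewrite /f => /op_inj [[]//|[e1 e2]].
  have /andP [_ h1] := parP hx; have /andP [_ h2] := parP hy.
  rewrite e2 in h1; rewrite -e1 in h2.
  by have := ltn_trans h1 h2; rewrite ltnn.
rewrite -hA -(card_in_imset inj); exact: subset_leq_card sub.
Qed.
End Conn.

Lemma exchange {R : realType} {n} (p : 'I_n -> R * R) (E : rel 'I_n) (v u w : 'I_n) :
  is_EMST p E -> E v u -> E v w -> u != w ->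
  edist (p v) (p w) <= edist (p u) (p w).
Proof.
move=> [[[sy irr] [con ne]] hmin] hvu hvw huw.
have hvu' : v != u by apply/eqP => e; subst; rewrite irr in hvu.
have hvw' : v != w by apply/eqP => e; subst; rewrite irr in hvw.
pose E' := fun a b => (E a b && ~~ ip a b v w) || ip a b u w.
have ipC : forall a b x y : 'I_n, ip a b x y = ip b a x y.
  by move=> a b x y; rewrite /ip orbC [(b == y) && _]andbC [(b == x) && _]andbC.
have sy' : forall i j, E' i j = E' j i by move=> i j; rewrite /E' sy ipC (ipC i j u w).
have irr' : forall i, E' i i = false.
  move=> i; rewrite /E' irr /ip /=; apply/negbTE; apply/negP => /orP [] /andP [/eqP a /eqP b];
  by subst; rewrite eqxx in huw.
have con' : forall i j, connect E' i j.
  have Euw : E' u w by rewrite /E' /ip !eqxx /= orbT.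
  have Evu : E' v u.
    rewrite /E' hvu /ip eqxx /= (negbTE huw) /=.
    by rewrite (negbTE hvw').
  move=> i j; apply: (connect_sub _ (con i j)) => x y hxy.
  case hE : (E' x y); first exact: connect1.
  move: hE; rewrite /E' hxy /= => /norP [] /negPn /orP [] /andP [/eqP -> /eqP ->] _.
  + apply: (connect_trans (connect1 Evu)); exact: connect1.
  + rewrite sy' in Euw; rewrite sy' in Evu.
    apply: (connect_trans (connect1 Euw)); exact: connect1.
have hS : eset E' = (eset E :\ op v w) :|: [set op u w].
  apply/setP => e; rewrite !inE -(ip_op e huw) -(ip_op e hvw').
  case: (e.1 < e.2)%N => //=; rewrite /E'.
  by case: (E _ _); case: (ip _ _ u w); case: (ip _ _ v w); rewrite ?orbT.
have Svw : op v w \in eset E by rewrite op_in.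
have ne0 : #|eset E| = n.-1 := ne.
have nuv : op u w != op v w.
  apply/eqP => /op_inj [[e _]|[e _]]; first by rewrite e eqxx in hvu'.
  by rewrite e eqxx in huw.
case Suw : (op u w \in eset E).
  have : #|eset E'| = (n.-1).-1.
    rewrite hS (finset.setUidPl _); last by rewrite finset.sub1set in_setD1 nuv Suw.
    by rewrite (cardsD1 (op v w)) Svw in ne0; rewrite -ne0 /=.
  have := conn_edges sy' (con' v) => h1 h2.
  have : (0 < n.-1)%N by rewrite -ne0 (cardsD1 (op v w)) Svw.
  move: h1; rewrite h2; case: (n.-1) => //= k; rewrite ltnn //.
have ne' : #|eset E'| = n.-1.
  rewrite hS finset.setUC cardsU1 in_setD1 Suw andbF /=.
  rewrite (cardsD1 (op v w)) Svw in ne0.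
  by rewrite -ne0 add1n.
have hw := hmin E' (conj (conj sy' irr') (conj con' ne')).
move: hw; rewrite !weightE hS finset.setUC big_setU1 /=; last by rewrite in_setD1 Suw andbF.
rewrite (big_setD1 (op v w)) //= !edist_op.
move=> h; lra.
Qed.

Definition Th {R : realType} {n} (p : 'I_n -> R * R) (v x : 'I_n) : R :=
  phi (p x - p v).

Lemma nz {R : realType} {n} (p : 'I_n -> R * R) (E : rel 'I_n) (v x : 'I_n) :
  injective p -> (forall i, E i i = false) -> E v x -> p x - p v != 0.
Proof.
move=> hp irr hx; rewrite subr_eq0; apply/eqP => /hp e; subst; by rewrite irr in hx.
Qed.

Lemma angE {R : realType} {n} (p : 'I_n -> R * R) (E : rel 'I_n) (v x y : 'I_n) :
  injective p -> (forall i, E i i = false) -> E v x -> E v y ->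
  angle_at p v x y = cyc (Th p v y - Th p v x).
Proof. by move=> hp irr hx hy; rewrite /angle_at ccw_cyc //; apply: nz hp irr _. Qed.

Lemma Th_range {R : realType} {n} (p : 'I_n -> R * R) (E : rel 'I_n) (v x : 'I_n) :
  injective p -> (forall i, E i i = false) -> E v x ->
  0 <= Th p v x /\ Th p v x < 360.
Proof. by move=> hp irr hx; apply/andP; apply: phi_range; apply: nz hp irr hx. Qed.

Lemma ge60 {R : realType} {n} (p : 'I_n -> R * R) (E : rel 'I_n) (v x y : 'I_n) :
  is_EMST p E -> injective p -> E v x -> E v y -> x != y ->
  60 <= angle_at p v x y.
Proof.
move=> H hp hx hy hxy; rewrite leNgt; apply/negP => hlt.
have [[[sy irr] _] _] := H.
have ha := nz hp irr hx; have hb := nz hp irr hy.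
have hd := lt60_dot ha hb hlt.
have e1 := exchange H hx hy hxy.
have e2 := exchange H hy hx (negbT (introF eqP (fun e => (elimN eqP hxy) (esym e)))).
have na := vnorm_gt0 ha; have nb := vnorm_gt0 hb.
have sa := vnorm_sq (p x - p v); have sb := vnorm_sq (p y - p v).
move: hd e1 e2 na nb sa sb.
rewrite /edist /vnorm /=.
set a1 := (p x).1 - (p v).1; set a2 := (p x).2 - (p v).2.
set b1 := (p y).1 - (p v).1; set b2 := (p y).2 - (p v).2.
have -> : (p v).1 - (p y).1 = - b1 by rewrite /b1 opprB.
have -> : (p v).2 - (p y).2 = - b2 by rewrite /b2 opprB.
have -> : (p v).1 - (p x).1 = - a1 by rewrite /a1 opprB.
have -> : (p v).2 - (p x).2 = - a2 by rewrite /a2 opprB.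
have -> : (p x).1 - (p y).1 = a1 - b1 by rewrite /a1 /b1; ring.
have -> : (p x).2 - (p y).2 = a2 - b2 by rewrite /a2 /b2; ring.
have -> : (p y).1 - (p x).1 = b1 - a1 by rewrite /a1 /b1; ring.
have -> : (p y).2 - (p x).2 = b2 - a2 by rewrite /a2 /b2; ring.
rewrite !sqrrN.
set A := Num.sqrt (a1 ^+ 2 + a2 ^+ 2); set B := Num.sqrt (b1 ^+ 2 + b2 ^+ 2).
move=> hd; rewrite ler_sqrt; last by rewrite addr_ge0 ?sqr_ge0.
move=> e1; rewrite ler_sqrt; last by rewrite addr_ge0 ?sqr_ge0.
move=> e2 na nb sa sb.
have h1 : A * B < A * A by nra.
have h2 : A * B < B * B by nra.
rewrite ltr_pM2l // in h1. rewrite ltr_pM2r // in h2. lra.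
Qed.

Lemma cyc_pos {R : realType} (t : R) : 0 <= t -> cyc t = t.
Proof. by rewrite /cyc => ->. Qed.
Lemma cyc_neg {R : realType} (t : R) : t < 0 -> cyc t = t + 360.
Proof. by rewrite /cyc ltNge => /negbTE ->. Qed.

Lemma lin60 {R : realType} {n} (p : 'I_n -> R * R) (E : rel 'I_n) (v x y : 'I_n) :
  is_EMST p E -> injective p -> E v x -> E v y -> x != y ->
  Th p v x <= Th p v y ->
  60 <= Th p v y - Th p v x /\ 60 <= 360 + Th p v x - Th p v y.
Proof.
move=> H hp hx hy hxy hle.
have [[[sy irr] _] _] := H.
have g1 := ge60 H hp hx hy hxy.
have g2 := ge60 H hp hy hx (negbT (introF eqP (fun e => (elimN eqP hxy) (esym e)))).
rewrite (angE hp irr hx hy) cyc_pos ?subr_ge0 // in g1.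
split => //.
have [h|h] := lerP 0 (Th p v x - Th p v y).
  exfalso; lra.
rewrite (angE hp irr hy hx) cyc_neg // in g2; lra.
Qed.

Lemma cons_of {R : realType} {n} (p : 'I_n -> R * R) (E : rel 'I_n) (v x y : 'I_n) :
  injective p -> (forall i, E i i = false) -> E v x -> E v y -> x != y ->
  (forall z, E v z -> z != x -> z != y ->
     cyc (Th p v y - Th p v x) <= cyc (Th p v z - Th p v x)) ->
  consecutive p E v x y.
Proof.
move=> hp irr hx hy hxy hz; split => // z ez zx zy.
rewrite (angE hp irr hx ez) (angE hp irr hx hy); apply/negP; rewrite -leNgt.
exact: hz.
Qed.

Lemma cons_le {R : realType} {n} (p : 'I_n -> R * R) (E : rel 'I_n) (v u w z : 'I_n) :
  consecutive p E v u w -> E v z -> z != u ->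
  angle_at p v u w <= angle_at p v u z.
Proof.
move=> [hu hw huw hc] hz zu.
have [e|ne] := eqVneq z w; first by subst.
by rewrite leNgt; apply/negP => /(hc z hz zu ne).
Qed.

Lemma nbr_list {R : realType} {n} (p : 'I_n -> R * R) (E : rel 'I_n) (v : 'I_n) :
  exists s, [/\ size s = deg E v, forall z, (z \in s) = E v z, uniq s &
    sorted (fun x y => Th p v x <= Th p v y) s].
Proof.
exists (sort (fun x y => Th p v x <= Th p v y) (enum [set u | E v u])).
split.
- by rewrite size_sort /deg cardE.
- by move=> z; rewrite mem_sort mem_enum inE.
- by rewrite sort_uniq enum_uniq.
- apply: sort_sorted => x y; exact: le_total.
Qed.

Lemma ltT_neq {R : realType} {n} (f : 'I_n -> R) (x y : 'I_n) : f x < f y -> x != y.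
Proof. by move=> h; apply/eqP => e; rewrite e ltxx in h. Qed.

Unset Implicit Arguments. Set Strict Implicit.

Lemma Lfwd {R : realType} (tx ty tz : R) : tx <= ty -> ty <= tz ->
  cyc (ty - tx) <= cyc (tz - tx).
Proof. move=> h1 h2; rewrite !cyc_pos; lra. Qed.
Lemma Lback {R : realType} (tx ty tz : R) : 0 <= tz -> tz < tx -> tx <= ty -> ty < 360 ->
  cyc (ty - tx) <= cyc (tz - tx).
Proof. move=> h1 h2 h3 h4; rewrite cyc_pos ?cyc_neg; lra. Qed.
Lemma Lwrap {R : realType} (tx ty tz : R) : ty <= tz -> tz < tx ->
  cyc (ty - tx) <= cyc (tz - tx).
Proof. move=> h1 h2; rewrite !cyc_neg; lra. Qed.
Lemma gap_lt {R : realType} {x y : R} : 60 <= y - x -> x < y.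
Proof. move=> h; lra. Qed.
Lemma cycP {R : realType} {x y : R} : x <= y -> cyc (y - x) = y - x.
Proof. by move=> h; rewrite cyc_pos // subr_ge0. Qed.
Lemma cycN {R : realType} {x y : R} : y < x -> cyc (y - x) = 360 + y - x.
Proof. move=> h; rewrite cyc_neg ?subr_lt0 //; lra. Qed.

Lemma uniq_ne {T : eqType} {x y : T} {l} : uniq (x :: y :: l) -> x != y.
Proof. by rewrite /= in_cons negb_or => /andP [/andP [-> _] _]. Qed.
Lemma uniq_tl {T : eqType} {x : T} {l} : uniq (x :: l) -> uniq l.
Proof. by case/andP. Qed.

Ltac solve_side := first [assumption | (apply: ltW; assumption)].

Ltac neqt := match goal with
  | H : is_true (_ < _) |- _ => first [exact: (ltT_neq H) | rewrite eq_sym; exact: (ltT_neq H)]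
  end.

Ltac zcase hmem := let hz := fresh "hz" in let hzx := fresh "hzx" in let hzy := fresh "hzy" in
  move=> z hz; rewrite -hmem !in_cons in_nil in hz;
  repeat (case/predU1P: hz => [->|hz]); try (by move: hz);
  move=> hzx hzy;
  try (by rewrite eqxx in hzx); try (by rewrite eqxx in hzy);
  first [ solve [apply: Lfwd; solve_side]
        | solve [apply: Lback; solve_side]
        | solve [apply: Lwrap; solve_side] ].

Ltac pick u w u' w' C C' A A' :=
  exists u, w, u', w'; split; [exact C | exact C' | split; neqt | rewrite A; lra | rewrite A'; lra].

Lemma case3 (R : realType) (n : nat) (p : 'I_n -> (R * R)%type)
  (E : rel 'I_n) (v : 'I_n) :
  injective p -> is_EMST p E -> deg E v = 3%N ->
        exists u w, consecutive p E v u w /\ angle_at p v u w <= 120.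
Proof.
move=> hp H hdeg; have [[[sy irr] _] _] := H.
have [s [hsz hmem hun hsort]] := nbr_list p E v.
rewrite hdeg in hsz.
case: s hsz hmem hun hsort => [|a [|b [|c [|? ?]]]] // _ hmem hun hsort.
move: hsort => /= /andP [sab /andP [sbc _]].
have nab := uniq_ne hun; have nbc := uniq_ne (uniq_tl hun).
have Ea : E v a by rewrite -hmem !in_cons eqxx.
have Eb : E v b by rewrite -hmem !in_cons eqxx orbT.
have Ec : E v c by rewrite -hmem !in_cons eqxx !orbT.
have [ra ra'] := Th_range hp irr Ea; have [rb rb'] := Th_range hp irr Eb.
have [rc rc'] := Th_range hp irr Ec.
have [gab _] := lin60 H hp Ea Eb nab sab.
have [gbc _] := lin60 H hp Eb Ec nbc sbc.
have lab := gap_lt gab; have lbc := gap_lt gbc.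
have lac : Th p v a < Th p v c := lt_trans lab lbc.
have nac : a != c by neqt.
have [_ gca] := lin60 H hp Ea Ec nac (ltW lac).
have C1 : consecutive p E v a b by apply: (cons_of hp irr Ea Eb nab); zcase hmem.
have C2 : consecutive p E v b c by apply: (cons_of hp irr Eb Ec nbc); zcase hmem.
have C3 : consecutive p E v c a.
  by apply: (cons_of hp irr Ec Ea); [rewrite eq_sym | zcase hmem].
have A1 := cycP (ltW lab); have A2 := cycP (ltW lbc); have A3 := cycN lac.
rewrite -(angE hp irr Ea Eb) in A1; rewrite -(angE hp irr Eb Ec) in A2.
rewrite -(angE hp irr Ec Ea) in A3.
have [h1|h1] := lerP (Th p v b - Th p v a) 120; first by exists a, b; rewrite A1.
have [h2|h2] := lerP (Th p v c - Th p v b) 120; first by exists b, c; rewrite A2.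
by exists c, a; rewrite A3; split => //; lra.
Qed.

Lemma case4 (R : realType) (n : nat) (p : 'I_n -> (R * R)%type)
  (E : rel 'I_n) (v : 'I_n) :
  injective p -> is_EMST p E -> deg E v = 4%N ->
        exists u w u' w',
          [/\ consecutive p E v u w, consecutive p E v u' w',
              nonadjacent u w u' w',
              angle_at p v u w <= 90 & angle_at p v u' w' <= 120].
Proof.
move=> hp H hdeg; have [[[sy irr] _] _] := H.
have [s [hsz hmem hun hsort]] := nbr_list p E v.
rewrite hdeg in hsz.
case: s hsz hmem hun hsort => [|a [|b [|c [|d [|? ?]]]]] // _ hmem hun hsort.
move: hsort => /= /andP [sab /andP [sbc /andP [scd _]]].
have nab := uniq_ne hun; have nbc := uniq_ne (uniq_tl hun).
have ncd := uniq_ne (uniq_tl (uniq_tl hun)).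
have Ea : E v a by rewrite -hmem !in_cons eqxx.
have Eb : E v b by rewrite -hmem !in_cons eqxx orbT.
have Ec : E v c by rewrite -hmem !in_cons eqxx !orbT.
have Ed : E v d by rewrite -hmem !in_cons eqxx !orbT.
have [ra ra'] := Th_range hp irr Ea; have [rb rb'] := Th_range hp irr Eb.
have [rc rc'] := Th_range hp irr Ec; have [rd rd'] := Th_range hp irr Ed.
have [gab _] := lin60 H hp Ea Eb nab sab.
have [gbc _] := lin60 H hp Eb Ec nbc sbc.
have [gcd _] := lin60 H hp Ec Ed ncd scd.
have lab := gap_lt gab; have lbc := gap_lt gbc; have lcd := gap_lt gcd.
have lac : Th p v a < Th p v c := lt_trans lab lbc.
have lbd : Th p v b < Th p v d := lt_trans lbc lcd.
have lad : Th p v a < Th p v d := lt_trans lac lcd.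
have nad : a != d by neqt.
have [_ gda] := lin60 H hp Ea Ed nad (ltW lad).
have C1 : consecutive p E v a b by apply: (cons_of hp irr Ea Eb nab); zcase hmem.
have C2 : consecutive p E v b c by apply: (cons_of hp irr Eb Ec nbc); zcase hmem.
have C3 : consecutive p E v c d by apply: (cons_of hp irr Ec Ed ncd); zcase hmem.
have C4 : consecutive p E v d a.
  by apply: (cons_of hp irr Ed Ea); [rewrite eq_sym | zcase hmem].
have A1 := cycP (ltW lab); have A2 := cycP (ltW lbc); have A3 := cycP (ltW lcd).
have A4 := cycN lad.
rewrite -(angE hp irr Ea Eb) in A1; rewrite -(angE hp irr Eb Ec) in A2.
rewrite -(angE hp irr Ec Ed) in A3; rewrite -(angE hp irr Ed Ea) in A4.
have [h1|h1] := lerP (Th p v b - Th p v a + (Th p v d - Th p v c)) 180.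
  have [h2|h2] := lerP (Th p v b - Th p v a) (Th p v d - Th p v c).
    pick a b c d C1 C3 A1 A3.
  pick c d a b C3 C1 A3 A1.
have [h2|h2] := lerP (Th p v c - Th p v b) (360 + Th p v a - Th p v d).
  pick b c d a C2 C4 A2 A4.
pick d a b c C4 C2 A4 A2.
Qed.

Lemma case5 (R : realType) (n : nat) (p : 'I_n -> (R * R)%type)
  (E : rel 'I_n) (v : 'I_n) :
  injective p -> is_EMST p E -> deg E v = 5%N ->
        (forall u w, consecutive p E v u w -> angle_at p v u w <= 120) /\
        exists u w u' w',
          [/\ consecutive p E v u w, consecutive p E v u' w',
              nonadjacent u w u' w',
              angle_at p v u w <= 90 & angle_at p v u' w' <= 90].
Proof.
move=> hp H hdeg; have [[[sy irr] _] _] := H.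
have [s [hsz hmem hun hsort]] := nbr_list p E v.
rewrite hdeg in hsz.
case: s hsz hmem hun hsort => [|a [|b [|c [|d [|e [|? ?]]]]]] // _ hmem hun hsort.
move: hsort => /= /andP [sab /andP [sbc /andP [scd /andP [sde _]]]].
have nab := uniq_ne hun; have nbc := uniq_ne (uniq_tl hun).
have ncd := uniq_ne (uniq_tl (uniq_tl hun)).
have nde := uniq_ne (uniq_tl (uniq_tl (uniq_tl hun))).
have Ea : E v a by rewrite -hmem !in_cons eqxx.
have Eb : E v b by rewrite -hmem !in_cons eqxx orbT.
have Ec : E v c by rewrite -hmem !in_cons eqxx !orbT.
have Ed : E v d by rewrite -hmem !in_cons eqxx !orbT.
have Ee : E v e by rewrite -hmem !in_cons eqxx !orbT.
have [ra ra'] := Th_range hp irr Ea; have [rb rb'] := Th_range hp irr Eb.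
have [rc rc'] := Th_range hp irr Ec; have [rd rd'] := Th_range hp irr Ed.
have [re re'] := Th_range hp irr Ee.
have [gab _] := lin60 H hp Ea Eb nab sab.
have [gbc _] := lin60 H hp Eb Ec nbc sbc.
have [gcd _] := lin60 H hp Ec Ed ncd scd.
have [gde _] := lin60 H hp Ed Ee nde sde.
have lab := gap_lt gab; have lbc := gap_lt gbc; have lcd := gap_lt gcd.
have lde := gap_lt gde.
have lac : Th p v a < Th p v c := lt_trans lab lbc.
have lbd : Th p v b < Th p v d := lt_trans lbc lcd.
have lce : Th p v c < Th p v e := lt_trans lcd lde.
have lad : Th p v a < Th p v d := lt_trans lac lcd.
have lbe : Th p v b < Th p v e := lt_trans lbd lde.
have lae : Th p v a < Th p v e := lt_trans lad lde.
have nae : a != e by neqt.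
have [_ gea] := lin60 H hp Ea Ee nae (ltW lae).
have C1 : consecutive p E v a b by apply: (cons_of hp irr Ea Eb nab); zcase hmem.
have C2 : consecutive p E v b c by apply: (cons_of hp irr Eb Ec nbc); zcase hmem.
have C3 : consecutive p E v c d by apply: (cons_of hp irr Ec Ed ncd); zcase hmem.
have C4 : consecutive p E v d e by apply: (cons_of hp irr Ed Ee nde); zcase hmem.
have C5 : consecutive p E v e a.
  by apply: (cons_of hp irr Ee Ea); [rewrite eq_sym | zcase hmem].
have A1 := cycP (ltW lab); have A2 := cycP (ltW lbc); have A3 := cycP (ltW lcd).
have A4 := cycP (ltW lde); have A5 := cycN lae.
rewrite -(angE hp irr Ea Eb) in A1; rewrite -(angE hp irr Eb Ec) in A2.
rewrite -(angE hp irr Ec Ed) in A3; rewrite -(angE hp irr Ed Ee) in A4.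
rewrite -(angE hp irr Ee Ea) in A5.
have B1 : angle_at p v a b <= 120 by rewrite A1; lra.
have B2 : angle_at p v b c <= 120 by rewrite A2; lra.
have B3 : angle_at p v c d <= 120 by rewrite A3; lra.
have B4 : angle_at p v d e <= 120 by rewrite A4; lra.
have B5 : angle_at p v e a <= 120 by rewrite A5; lra.
split.
  move=> u w hc; have [Eu _ _ _] := hc.
  rewrite -hmem !in_cons in_nil in Eu.
  repeat (case/predU1P: Eu => [eu|Eu]); try (by move: Eu); subst u.
  - by apply: (le_trans (cons_le hc Eb _)); first neqt.
  - by apply: (le_trans (cons_le hc Ec _)); first neqt.
  - by apply: (le_trans (cons_le hc Ed _)); first neqt.
  - by apply: (le_trans (cons_le hc Ee _)); first neqt.
  - by apply: (le_trans (cons_le hc Ea _)); first neqt.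
have [h1|h1] := lerP (Th p v b - Th p v a) 90.
  have [h3|h3] := lerP (Th p v d - Th p v c) 90.
    pick a b c d C1 C3 A1 A3.
  have [h4|h4] := lerP (Th p v e - Th p v d) 90.
    pick a b d e C1 C4 A1 A4.
  have : (1 : R) <= 0 by lra.
  by rewrite ler10.

have [h2|h2] := lerP (Th p v c - Th p v b) 90.
  have [h4|h4] := lerP (Th p v e - Th p v d) 90.
    pick b c d e C2 C4 A2 A4.
  have [h5|h5] := lerP (360 + Th p v a - Th p v e) 90.
    pick b c e a C2 C5 A2 A5.
  have : (1 : R) <= 0 by lra.
  by rewrite ler10.

pick c d e a C3 C5 A3 A5.
Qed.

Theorem lemma1 (R : realType) (n : nat) (p : 'I_n -> (R * R)%type)
  (E : rel 'I_n) (v : 'I_n) :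
  injective p -> is_EMST p E ->
  [/\ (deg E v = 3%N ->
        exists u w, consecutive p E v u w /\ angle_at p v u w <= 120),
      (deg E v = 4%N ->
        exists u w u' w',
          [/\ consecutive p E v u w, consecutive p E v u' w',
              nonadjacent u w u' w',
              angle_at p v u w <= 90 & angle_at p v u' w' <= 120])
    & (deg E v = 5%N ->
        (forall u w, consecutive p E v u w -> angle_at p v u w <= 120) /\
        exists u w u' w',
          [/\ consecutive p E v u w, consecutive p E v u' w',
              nonadjacent u w u' w',
              angle_at p v u w <= 90 & angle_at p v u' w' <= 90])].
Proof.
move=> hp H; split.
- exact: (@case3 R n p E v hp H).
- exact: (@case4 R n p E v hp H).
- exact: (@case5 R n p E v hp H).
Qed.
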